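(* For every integer $d\ge3$, the map $\nu\mapsto\vartheta_{d,\nu}$ is strictly increasing, and for every $\nu>0$ the map $d\mapsto\vartheta_{d,\nu}$ is strictly increasing. Moreover, for every $d\ge3$, $$\lim_{\nu\downarrow0}\vartheta_{d,\nu}=\vartheta_{d,0}=\frac{d-2}{d-1},\qquad \lim_{\nu\to\infty}\vartheta_{d,\nu}=1,$$ and for every $\nu>0$, $\lim_{d\to\infty}\vartheta_{d,\nu}=1$.
   Context: For $d\ge2$ and $\nu\in[0,\infty)$ let $\beta_d=\sqrt{d-1}$, $\rho_d=2\sqrt{d-1}/d$, let $\Delta_{d,\nu}$ be the continued fraction $\Delta_{d,\nu}=\cfrac{1}{a_1-\cfrac{1}{a_2-\cfrac{1}{a_3-\cdots}}}$ with $a_i=\frac{2+i\nu}{\rho_d}$ (convergent since $a_i\ge2$), and define $\vartheta_{d,\nu}=1-\Delta_{d,\nu}/\beta_d$. *)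

(* Defs.v *)
From Stdlib Require Import Reals.
From Coquelicot Require Import Coquelicot.
Open Scope R_scope.

Definition beta_d (d : nat) : R := sqrt (INR d - 1).
Definition rho_d (d : nat) : R := 2 * sqrt (INR d - 1) / INR d.

Definition cf_a (d : nat) (nu : R) (i : nat) : R := (2 + INR i * nu) / rho_d d.

(* cf_tail d nu k n = 1/(a_k - 1/(a_{k+1} - ... 1/a_{k+n-1})), truncated
   after n partial quotients (the empty tail is 0). *)
Fixpoint cf_tail (d : nat) (nu : R) (k n : nat) : R :=
  match n with
  | O => 0
  | S n' => / (cf_a d nu k - cf_tail d nu (S k) n')
  end.

Definition Delta_conv (d : nat) (nu : R) (n : nat) : R := cf_tail d nu 1 n.

Definition Delta (d : nat) (nu : R) : R := real (Lim_seq (Delta_conv d nu)).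

Definition theta (d : nat) (nu : R) : R := 1 - Delta d nu / beta_d d.

(* Main.v *)
Require Import Defs.
From Stdlib Require Import Reals Lra Lia.
From Coquelicot Require Import Coquelicot.
Open Scope R_scope.

Fixpoint ct (a : nat -> R) (k n : nat) : R :=
  match n with O => 0 | S n' => / (a k - ct a (S k) n') end.

Section Gen.
Variables (A c : R) (Hc : 0 < c) (HcA : c < A) (Hfix : / (A - c) <= c).

Lemma ct_bound a : (forall i, A <= a i) -> forall n k, 0 <= ct a k n <= c.
Proof.
  intros Ha n; induction n as [|n IH]; intros k; simpl. lra.
  destruct (IH (S k)) as [H1 H2]. specialize (Ha k).
  assert (0 < A - c) by lra.
  split. left; apply Rinv_0_lt_compat; lra.
  apply Rle_trans with (/ (A - c)); auto.
  apply Rinv_le_contravar; lra.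
Qed.

Lemma ct_incr a : (forall i, A <= a i) -> forall n k, ct a k n <= ct a k (S n).
Proof.
  intros Ha n; induction n as [|n IH]; intros k.
  simpl. left; apply Rinv_0_lt_compat. specialize (Ha k); lra.
  change (/ (a k - ct a (S k) n) <= / (a k - ct a (S k) (S n))).
  pose proof (IH (S k)). pose proof (ct_bound a Ha (S n) (S k)). specialize (Ha k).
  apply Rinv_le_contravar; lra.
Qed.

Lemma ct_cmp a b : (forall i, A <= a i) -> (forall i, a i <= b i) ->
  forall n k, ct b k n <= ct a k n.
Proof.
  intros Ha Hab n; induction n as [|n IH]; intros k; simpl. lra.
  pose proof (IH (S k)). pose proof (ct_bound a Ha n (S k)).
  assert (Hb : forall i, A <= b i) by (intro i; specialize (Ha i); specialize (Hab i); lra).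
  pose proof (ct_bound b Hb n (S k)). specialize (Ha k). specialize (Hab k).
  apply Rinv_le_contravar; lra.
Qed.

Lemma ct_diff a b dl k0 : c * c <= 1 -> (forall i, A <= a i) -> (forall i, a i <= b i) ->
  0 <= dl -> (forall i, (i < k0)%nat -> b i - a i <= dl) ->
  forall n k, (k + n <= k0)%nat -> ct a k n - ct b k n <= INR n * dl.
Proof.
  intros Hq Ha Hab Hdl0 Hd n; induction n as [|n IH]; intros k Hk; simpl. lra.
  assert (Hb : forall i, A <= b i) by (intro i; specialize (Ha i); specialize (Hab i); lra).
  pose proof (IH (S k) ltac:(lia)).
  pose proof (ct_bound a Ha n (S k)). pose proof (ct_bound b Hb n (S k)).
  pose proof (ct_cmp a b Ha Hab n (S k)).
  set (s := ct a (S k) n) in *. set (t := ct b (S k) n) in *.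
  pose proof (Ha k). pose proof (Hab k). pose proof (Hd k ltac:(lia)).
  assert (HAc : 0 < A - c) by lra.
  assert (Hinv : 1 <= c * (A - c)).
  { apply Rmult_le_reg_r with (/ (A - c)). apply Rinv_0_lt_compat; lra.
    rewrite Rmult_assoc, Rinv_r by lra. lra. }
  assert (E : / (a k - s) - / (b k - t) = ((b k - a k) + (s - t)) / ((a k - s) * (b k - t)))
    by (field; split; lra).
  rewrite E.
  assert (Hden : 1 <= c * c * ((a k - s) * (b k - t))).
  { assert (A - c <= a k - s) by lra. assert (A - c <= b k - t) by lra.
    assert (1 <= (c * (A - c)) * (c * (A - c))) by nra.
    apply Rle_trans with ((c * (A - c)) * (c * (A - c))); auto.
    replace (c * c * ((a k - s) * (b k - t))) with ((c * (a k - s)) * (c * (b k - t))) by ring.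
    apply Rmult_le_compat; nra. }
  assert (Hpos : 0 < (a k - s) * (b k - t)) by nra.
  apply Rle_trans with (c * c * ((b k - a k) + (s - t))).
  { unfold Rdiv. apply Rmult_le_reg_r with ((a k - s) * (b k - t)); auto.
    rewrite Rmult_assoc, Rinv_l by lra. nra. }
  assert (c * c * ((b k - a k) + (s - t)) <= (b k - a k) + (s - t)) by nra.
  assert (INR (S n) = INR n + 1) by apply S_INR. destruct n; simpl in *; lra.
Qed.
End Gen.

Lemma cf_tail_ct d nu n : forall k, cf_tail d nu k n = ct (cf_a d nu) k n.
Proof. induction n; intros k; simpl; auto. rewrite IHn; auto. Qed.

Section D.
Variable d : nat.
Hypothesis Hd : (3 <= d)%nat.
Let s := sqrt (INR d - 1).

Lemma dR : 3 <= INR d.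
Proof. replace 3 with (INR 3) by (simpl; ring). apply le_INR; auto. Qed.
Lemma s_pos : 0 < s.
Proof. pose proof dR. apply sqrt_lt_R0. lra. Qed.
Lemma s_sq : s * s = INR d - 1.
Proof. pose proof dR. apply sqrt_sqrt. lra. Qed.
Lemma s_ge1 : 1 < s.
Proof. pose proof s_pos. pose proof s_sq. pose proof dR. nra. Qed.

Lemma cf_a_eq nu i : cf_a d nu i = (2 + INR i * nu) * INR d / (2 * s).
Proof. pose proof s_pos; pose proof dR. unfold cf_a, rho_d. fold s. field. lra. Qed.

Definition AA := INR d / s.
Definition cc := / s.

Lemma AA_cc : AA - cc = s.
Proof. pose proof s_pos; pose proof s_sq. unfold AA, cc. field_simplify; try lra.
  rewrite <- H0. field. lra. Qed.

Lemma cc_pos : 0 < cc.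
Proof. pose proof s_pos. unfold cc. apply Rinv_0_lt_compat; lra. Qed.
Lemma cc_lt : cc < AA.
Proof. pose proof AA_cc; pose proof s_pos; lra. Qed.
Lemma cc_fix : / (AA - cc) <= cc.
Proof. rewrite AA_cc. unfold cc. lra. Qed.
Lemma cc_sq : cc * cc = / (INR d - 1).
Proof. pose proof s_pos. rewrite <- s_sq. unfold cc. field. lra. Qed.
Lemma cc_sq_le : cc * cc <= 1.
Proof. rewrite cc_sq. pose proof dR. rewrite <- Rinv_1. apply Rinv_le_contravar; lra. Qed.

Lemma cf_a_ge nu i : 0 <= nu -> AA <= cf_a d nu i.
Proof.
  intros Hnu. rewrite cf_a_eq. unfold AA. pose proof s_pos; pose proof dR.
  assert (0 <= INR i * nu) by (apply Rmult_le_pos; auto using pos_INR).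
  unfold Rdiv. rewrite Rinv_mult.
  replace (INR d * / s) with (2 * INR d * / 2 * /s) by (field; lra).
  assert (0 < / s) by (apply Rinv_0_lt_compat; lra).
  assert (2 * INR d <= (2 + INR i * nu) * INR d) by nra.
  nra.
Qed.

Lemma conv_bound nu n : 0 <= nu -> 0 <= Delta_conv d nu n <= cc.
Proof.
  intros Hnu. unfold Delta_conv. rewrite cf_tail_ct.
  apply (ct_bound AA cc cc_pos cc_lt cc_fix). intro; apply cf_a_ge; auto.
Qed.

Lemma conv_incr nu n : 0 <= nu -> Delta_conv d nu n <= Delta_conv d nu (S n).
Proof.
  intros Hnu. unfold Delta_conv. rewrite !cf_tail_ct.
  apply (ct_incr AA cc cc_pos cc_lt cc_fix). intro; apply cf_a_ge; auto.
Qed.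

Lemma Delta_lim nu : 0 <= nu -> is_lim_seq (Delta_conv d nu) (Defs.Delta d nu).
Proof.
  intros Hnu.
  assert (E : ex_finite_lim_seq (Delta_conv d nu)).
  { apply ex_finite_lim_seq_incr with cc. intro; apply conv_incr; auto.
    intro; apply conv_bound; auto. }
  destruct E as [l Hl]. unfold Defs.Delta. rewrite (is_lim_seq_unique _ _ Hl). exact Hl.
Qed.

End D.

Lemma lim_le u (l : R) M N : is_lim_seq u l -> (forall n, (N <= n)%nat -> u n <= M) -> l <= M.
Proof.
  intros Hl H. assert (Rbar_le l M).
  { apply is_lim_seq_le_loc with u (fun _ => M); auto. exists N; auto.
    apply is_lim_seq_const. }
  exact H0.
Qed.
Lemma lim_ge u (l : R) M N : is_lim_seq u l -> (forall n, (N <= n)%nat -> M <= u n) -> M <= l.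
Proof.
  intros Hl H. assert (Rbar_le M l).
  { apply is_lim_seq_le_loc with (fun _ => M) u; auto. exists N; auto.
    apply is_lim_seq_const. }
  exact H0.
Qed.

Lemma incr_le (u : nat -> R) : (forall n, u n <= u (S n)) -> forall m n, (m <= n)%nat -> u m <= u n.
Proof. intros H m n Hmn. induction Hmn. lra. specialize (H m0). lra. Qed.

Lemma Delta_ge_conv d (Hd : (3 <= d)%nat) nu N : 0 <= nu -> Delta_conv d nu N <= Defs.Delta d nu.
Proof.
  intros Hnu. apply lim_ge with (Delta_conv d nu) N. apply Delta_lim; auto.
  intros n Hn. apply incr_le; auto. intro; apply conv_incr; auto.
Qed.

Lemma Delta_le_cc d (Hd : (3 <= d)%nat) nu : 0 <= nu -> Defs.Delta d nu <= cc d.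
Proof.
  intros Hnu. apply lim_le with (Delta_conv d nu) 0%nat. apply Delta_lim; auto.
  intros n _. apply conv_bound; auto.
Qed.

Lemma Delta_ge0 d (Hd : (3 <= d)%nat) nu : 0 <= nu -> 0 <= Defs.Delta d nu.
Proof.
  intros Hnu. apply lim_ge with (Delta_conv d nu) 0%nat. apply Delta_lim; auto.
  intros n _. apply conv_bound; auto.
Qed.

Lemma conv_S d nu n : Delta_conv d nu (S n) = / (cf_a d nu 1 - ct (cf_a d nu) 2 n).
Proof. unfold Delta_conv. simpl. rewrite cf_tail_ct. reflexivity. Qed.

Lemma Delta_pos d (Hd : (3 <= d)%nat) nu : 0 <= nu -> 0 < Defs.Delta d nu.
Proof.
  intros Hnu. apply Rlt_le_trans with (Delta_conv d nu 1).
  rewrite conv_S. simpl. rewrite Rminus_0_r. apply Rinv_0_lt_compat.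
  pose proof (cf_a_ge d Hd nu 1 Hnu). pose proof (cc_lt d Hd). pose proof (cc_pos d Hd). lra.
  apply Delta_ge_conv; auto.
Qed.

Lemma Delta_le_a1 d (Hd : (3 <= d)%nat) nu : 0 <= nu -> Defs.Delta d nu <= / (cf_a d nu 1 - cc d).
Proof.
  intros Hnu. apply lim_le with (Delta_conv d nu) 1%nat. apply Delta_lim; auto.
  intros [|n] Hn. lia. rewrite conv_S.
  pose proof (ct_bound (AA d) (cc d) (cc_pos d Hd) (cc_lt d Hd) (cc_fix d Hd) (cf_a d nu)
    (fun i => cf_a_ge d Hd nu i Hnu) n 2).
  pose proof (cf_a_ge d Hd nu 1 Hnu). pose proof (cc_lt d Hd).
  apply Rinv_le_contravar; lra.
Qed.

Lemma theta_eq d nu : theta d nu = 1 - Defs.Delta d nu / sqrt (INR d - 1).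
Proof. reflexivity. Qed.

Lemma inv_gap x y X Y : 0 < x -> x <= X -> 0 < y -> y <= Y -> x <= y ->
  (y - x) / (X * Y) <= / x - / y.
Proof.
  intros. replace (/ x - / y) with ((y - x) * / (x * y)) by (field; lra).
  unfold Rdiv. apply Rmult_le_compat_l. lra.
  apply Rinv_le_contravar. nra. apply Rmult_le_compat; lra.
Qed.

Lemma part1 d : (3 <= d)%nat ->
  forall nu1 nu2 : R, 0 <= nu1 -> nu1 < nu2 -> theta d nu1 < theta d nu2.
Proof.
  intros Hd nu1 nu2 H1 H12.
  assert (H2 : 0 <= nu2) by lra.
  pose proof (s_pos d Hd) as Hs.
  set (A1 := cf_a d nu1 1). set (A2 := cf_a d nu2 1).
  assert (HA1 : AA d <= A1) by (apply cf_a_ge; auto).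
  assert (HA12 : A1 < A2).
  { unfold A1, A2. rewrite !cf_a_eq by auto. pose proof (dR d Hd). simpl.
    unfold Rdiv. apply Rmult_lt_compat_r. apply Rinv_0_lt_compat; lra. nra. }
  pose proof (cc_lt d Hd). pose proof (cc_pos d Hd).
  set (eps := (A2 - A1) / (A1 * A2)).
  assert (Heps : 0 < eps).
  { unfold eps. apply Rdiv_lt_0_compat. lra. nra. }
  assert (Hgap : forall n, Delta_conv d nu2 (S n) + eps <= Delta_conv d nu1 (S n)).
  { intro n. rewrite !conv_S. fold A1 A2.
    pose proof (ct_bound (AA d) (cc d) (cc_pos d Hd) (cc_lt d Hd) (cc_fix d Hd) (cf_a d nu1)
      (fun i => cf_a_ge d Hd nu1 i H1) n 2).
    pose proof (ct_bound (AA d) (cc d) (cc_pos d Hd) (cc_lt d Hd) (cc_fix d Hd) (cf_a d nu2)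
      (fun i => cf_a_ge d Hd nu2 i H2) n 2).
    assert (Hle : forall i, cf_a d nu1 i <= cf_a d nu2 i).
    { intro i. rewrite !cf_a_eq by auto. pose proof (dR d Hd). pose proof (pos_INR i).
      assert (INR i * nu1 <= INR i * nu2) by (apply Rmult_le_compat_l; lra).
      unfold Rdiv. apply Rmult_le_compat_r. left; apply Rinv_0_lt_compat; lra.
      apply Rmult_le_compat_r; lra. }
    pose proof (ct_cmp (AA d) (cc d) (cc_pos d Hd) (cc_lt d Hd) (cc_fix d Hd) (cf_a d nu1) (cf_a d nu2)
      (fun i => cf_a_ge d Hd nu1 i H1) Hle n 2).
    set (t1 := ct (cf_a d nu1) 2 n) in *. set (t2 := ct (cf_a d nu2) 2 n) in *.
    assert (/ (A2 - t2) <= / (A2 - t1)) by (apply Rinv_le_contravar; lra).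
    pose proof (inv_gap (A1 - t1) (A2 - t1) A1 A2 ltac:(lra) ltac:(lra) ltac:(lra) ltac:(lra) ltac:(lra)).
    unfold eps. replace (A2 - t1 - (A1 - t1)) with (A2 - A1) in * by ring. lra. }
  assert (HD : Defs.Delta d nu2 + eps <= Defs.Delta d nu1).
  { assert (HR : Rbar_le (Defs.Delta d nu2 + eps) (Defs.Delta d nu1)).
    { apply is_lim_seq_le_loc with (fun n => Delta_conv d nu2 n + eps) (Delta_conv d nu1).
      exists 1%nat. intros [|n] Hn. lia. apply Hgap.
      apply is_lim_seq_plus'. apply Delta_lim; auto. apply is_lim_seq_const.
      apply Delta_lim; auto. }
    exact HR. }
  rewrite !theta_eq. fold (sqrt (INR d - 1)) in Hs.
  unfold Rdiv. apply Rplus_lt_compat_l. apply Ropp_lt_contravar.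
  apply Rmult_lt_compat_r. apply Rinv_0_lt_compat; auto. lra.
Qed.

Lemma part2 : forall nu : R, 0 < nu ->
     forall d1 d2 : nat, (3 <= d1)%nat -> (d1 < d2)%nat ->
       theta d1 nu < theta d2 nu.
Proof.
  intros nu Hnu d1 d2 H1 H12.
  assert (H2 : (3 <= d2)%nat) by lia.
  pose proof (dR d1 H1) as E1. pose proof (dR d2 H2) as E2.
  assert (E12 : INR d1 + 1 <= INR d2).
  { rewrite <- S_INR. apply le_INR. lia. }
  pose proof (s_pos d1 H1) as S1. pose proof (s_pos d2 H2) as S2.
  pose proof (s_sq d1 H1) as Q1. pose proof (s_sq d2 H2) as Q2.
  set (s1 := sqrt (INR d1 - 1)) in *. set (s2 := sqrt (INR d2 - 1)) in *.
  assert (Hs12 : s1 < s2) by nra.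
  assert (Hx : s2 * INR d1 <= s1 * INR d2).
  { apply Rsqr_incr_0_var. unfold Rsqr.
    replace (s2 * INR d1 * (s2 * INR d1)) with ((s2 * s2) * (INR d1 * INR d1)) by ring.
    replace (s1 * INR d2 * (s1 * INR d2)) with ((s1 * s1) * (INR d2 * INR d2)) by ring.
    rewrite Q1, Q2.
    assert (0 <= (INR d2 - INR d1) * ((INR d1 - 1) * (INR d2 - 1) - 1)).
    { apply Rmult_le_pos. lra. assert (4 <= (INR d1 - 1) * (INR d2 - 1)) by nra. lra. }
    nra. nra. }
  assert (Hle : forall i, cf_a d1 nu i <= cf_a d2 nu i).
  { intro i. rewrite (cf_a_eq d1 H1), (cf_a_eq d2 H2). fold s1 s2.
    pose proof (pos_INR i). assert (0 <= INR i * nu) by nra.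
    set (w := 2 + INR i * nu).
    assert (0 < w) by (unfold w; lra).
    apply Rmult_le_reg_r with (2 * s1 * (2 * s2)). nra.
    replace (w * INR d1 / (2 * s1) * (2 * s1 * (2 * s2))) with (2 * w * (s2 * INR d1)) by (field; lra).
    replace (w * INR d2 / (2 * s2) * (2 * s1 * (2 * s2))) with (2 * w * (s1 * INR d2)) by (field; lra).
    nra. }
  assert (Hnu0 : 0 <= nu) by lra.
  assert (HD : Defs.Delta d2 nu <= Defs.Delta d1 nu).
  { assert (HR : Rbar_le (Defs.Delta d2 nu) (Defs.Delta d1 nu)).
    { apply is_lim_seq_le_loc with (Delta_conv d2 nu) (Delta_conv d1 nu).
      exists 0%nat. intros n _. unfold Delta_conv. rewrite !cf_tail_ct.
      apply (ct_cmp (AA d1) (cc d1) (cc_pos d1 H1) (cc_lt d1 H1) (cc_fix d1 H1)).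
      intro; apply cf_a_ge; auto. auto.
      apply Delta_lim; auto. apply Delta_lim; auto. }
    exact HR. }
  pose proof (Delta_pos d1 H1 nu Hnu0).
  pose proof (Delta_ge0 d2 H2 nu Hnu0).
  rewrite !theta_eq. fold s1 s2.
  apply Rplus_lt_compat_l. apply Ropp_lt_contravar.
  apply Rle_lt_trans with (Defs.Delta d1 nu / s2).
  unfold Rdiv. apply Rmult_le_compat_r. left; apply Rinv_0_lt_compat; lra. auto.
  unfold Rdiv. apply Rmult_lt_compat_l. auto. apply Rinv_lt_contravar; nra.
Qed.

Lemma cf_a0 d (Hd : (3 <= d)%nat) i : cf_a d 0 i = AA d.
Proof. rewrite cf_a_eq by auto. unfold AA. pose proof (s_pos d Hd). field. lra. Qed.

Lemma conv0_err d (Hd : (3 <= d)%nat) : forall n k,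
  cc d - ct (cf_a d 0) k n <= cc d * (cc d * cc d) ^ n.
Proof.
  pose proof (s_pos d Hd) as Hs. pose proof (AA_cc d Hd) as Ha. pose proof (cc_pos d Hd).
  assert (Hcs : cc d * sqrt (INR d - 1) = 1) by (unfold cc; field; lra).
  intros n; induction n as [|n IH]; intros k. simpl. lra.
  simpl (ct _ k (S n)). rewrite cf_a0 by auto.
  pose proof (IH (S k)).
  pose proof (ct_bound (AA d) (cc d) (cc_pos d Hd) (cc_lt d Hd) (cc_fix d Hd) (cf_a d 0)
      (fun i => cf_a_ge d Hd 0 i (Rle_refl 0)) n (S k)).
  set (t := ct (cf_a d 0) (S k) n) in *. set (s := sqrt (INR d - 1)) in *.
  set (c := cc d) in *. set (A := AA d) in *.
  assert (E : c - / (A - t) = (c - t) / (s * (A - t))).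
  { field_simplify_eq. 2: split; lra.
    assert (c = A - s) by lra. nra. }
  rewrite E.
  apply Rle_trans with ((c - t) * (c * c)).
  { unfold Rdiv. apply Rmult_le_compat_l. lra.
    replace (c * c) with (/ (s * s)) by (unfold c, cc; fold s; field; lra).
    apply Rinv_le_contravar. nra. apply Rmult_le_compat_l; lra. }
  simpl. assert (0 <= c * c) by nra. nra.
Qed.

Lemma Delta0 d (Hd : (3 <= d)%nat) : Defs.Delta d 0 = cc d.
Proof.
  apply Rle_antisym. apply Delta_le_cc; auto. lra.
  destruct (Rle_or_lt (cc d) (Defs.Delta d 0)) as [H|H]; auto. exfalso.
  pose proof (cc_pos d Hd).
  assert (Hq : Rabs (cc d * cc d) < 1).
  { rewrite cc_sq by auto. pose proof (dR d Hd). rewrite Rabs_pos_eq.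
    rewrite <- Rinv_1. apply Rinv_lt_contravar; lra. left; apply Rinv_0_lt_compat; lra. }
  destruct (pow_lt_1_zero _ Hq ((cc d - Defs.Delta d 0) / cc d)) as [N HN].
  apply Rdiv_lt_0_compat; lra.
  specialize (HN N (le_n N)). rewrite Rabs_pos_eq in HN by (apply pow_le; nra).
  pose proof (conv0_err d Hd N 1).
  pose proof (Delta_ge_conv d Hd 0 N (Rle_refl 0)) as H3. unfold Delta_conv in H3.
  rewrite cf_tail_ct in H3.
  assert (cc d * (cc d * cc d) ^ N < cc d - Defs.Delta d 0).
  { apply Rmult_lt_reg_r with (/ cc d). apply Rinv_0_lt_compat; lra.
    replace (cc d * (cc d * cc d) ^ N * / cc d) with ((cc d * cc d) ^ N) by (field; lra). exact HN. }
  lra.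
Qed.

Lemma theta0 d (Hd : (3 <= d)%nat) : theta d 0 = (INR d - 2) / (INR d - 1).
Proof.
  rewrite theta_eq, Delta0 by auto. pose proof (s_pos d Hd). pose proof (s_sq d Hd).
  pose proof (dR d Hd). unfold cc. set (s := sqrt (INR d - 1)) in *.
  replace (INR d) with (s * s + 1) by lra. field. nra.
Qed.

Lemma rho_pos d (Hd : (3 <= d)%nat) : 0 < rho_d d.
Proof. unfold rho_d. pose proof (s_pos d Hd). pose proof (dR d Hd).
  apply Rdiv_lt_0_compat; lra. Qed.

Lemma part3a d (Hd : (3 <= d)%nat) : filterlim (theta d) (at_right 0) (locally (theta d 0)).
Proof.
  apply filterlim_locally. intros eps.
  pose proof (s_pos d Hd) as Hs. pose proof (cc_pos d Hd) as Hc.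
  pose proof (rho_pos d Hd) as Hr.
  set (s := sqrt (INR d - 1)) in *.
  set (e := eps * s).
  assert (He : 0 < e) by (unfold e; destruct eps; simpl; nra).
  assert (Hq : Rabs (cc d * cc d) < 1).
  { rewrite cc_sq by auto. pose proof (dR d Hd). rewrite Rabs_pos_eq.
    rewrite <- Rinv_1. apply Rinv_lt_contravar; lra. left; apply Rinv_0_lt_compat; lra. }
  destruct (pow_lt_1_zero _ Hq (e / 2 / cc d)) as [N HN].
  { apply Rdiv_lt_0_compat; lra. }
  specialize (HN N (le_n N)). rewrite Rabs_pos_eq in HN by (apply pow_le; nra).
  assert (HN' : cc d * (cc d * cc d) ^ N < e / 2).
  { apply Rmult_lt_reg_r with (/ cc d). apply Rinv_0_lt_compat; lra.
    replace (cc d * (cc d * cc d) ^ N * / cc d) with ((cc d * cc d) ^ N) by (field; lra). exact HN. }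
  set (rho := rho_d d) in *.
  set (M := INR N * INR N).
  assert (HM : 0 <= M) by (unfold M; pose proof (pos_INR N); nra).
  set (delta := e * rho / (2 * (M + 1))).
  assert (Hdel : 0 < delta) by (unfold delta; apply Rdiv_lt_0_compat; nra).
  exists (mkposreal delta Hdel). intros y Hy Hy0.
  change (Rabs (y - 0) < delta) in Hy. rewrite Rminus_0_r, Rabs_pos_eq in Hy by lra.
  change (Rabs (theta d y - theta d 0) < eps).
  assert (Hy0' : 0 <= y) by lra.
  pose proof (Delta_le_cc d Hd y Hy0').
  pose proof (Delta_ge_conv d Hd y N Hy0') as HG. unfold Delta_conv in HG.
  rewrite cf_tail_ct in HG.
  pose proof (conv0_err d Hd N 1) as HE.
  assert (Hab : forall i, cf_a d 0 i <= cf_a d y i).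
  { intro i. unfold cf_a. fold rho. unfold Rdiv. apply Rmult_le_compat_r.
    left; apply Rinv_0_lt_compat; lra. pose proof (pos_INR i). nra. }
  pose proof (ct_diff (AA d) (cc d) (cc_pos d Hd) (cc_lt d Hd) (cc_fix d Hd)
    (cf_a d 0) (cf_a d y) (INR N * y / rho) (S N) (cc_sq_le d Hd)
    (fun i => cf_a_ge d Hd 0 i (Rle_refl 0)) Hab) as HD.
  assert (0 <= INR N * y / rho).
  { apply Rdiv_le_0_compat; auto. apply Rmult_le_pos; auto using pos_INR. }
  specialize (HD H0).
  assert (Hi : forall i, (i < S N)%nat -> cf_a d y i - cf_a d 0 i <= INR N * y / rho).
  { intros i Hi. unfold cf_a. fold rho.
    replace ((2 + INR i * y) / rho - (2 + INR i * 0) / rho) with (INR i * y / rho) by (field; lra).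
    unfold Rdiv. apply Rmult_le_compat_r. left; apply Rinv_0_lt_compat; lra.
    apply Rmult_le_compat_r; auto. apply le_INR; lia. }
  specialize (HD Hi N 1%nat ltac:(lia)).
  assert (Hb : INR N * (INR N * y / rho) < e / 2).
  { replace (INR N * (INR N * y / rho)) with (M * y / rho) by (unfold M; field; lra).
    apply Rle_lt_trans with (M * delta / rho).
    unfold Rdiv. apply Rmult_le_compat_r. left; apply Rinv_0_lt_compat; lra.
    apply Rmult_le_compat_l; lra.
    unfold delta. replace (M * (e * rho / (2 * (M + 1))) / rho) with (e / 2 * (M / (M + 1))) by (field; lra).
    assert (M / (M + 1) < 1).
    { apply Rmult_lt_reg_r with (M + 1). lra. unfold Rdiv. rewrite Rmult_assoc, Rinv_l by lra. lra. }
    nra. }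
  rewrite !theta_eq, Delta0 by auto. fold s.
  replace (1 - Defs.Delta d y / s - (1 - cc d / s)) with ((cc d - Defs.Delta d y) / s) by (field; lra).
  rewrite Rabs_pos_eq.
  2: { apply Rdiv_le_0_compat; lra. }
  apply Rmult_lt_reg_r with s; auto. unfold Rdiv. rewrite Rmult_assoc, Rinv_l by lra.
  fold e. rewrite Rmult_1_r. unfold e. rewrite Rmult_comm. unfold e in *. lra.
Qed.

Lemma part3c d (Hd : (3 <= d)%nat) : is_lim (theta d) p_infty 1.
Proof.
  apply is_lim_spec. intros eps. simpl.
  pose proof (s_pos d Hd) as Hs. pose proof (dR d Hd) as HdR.
  pose proof (cc_pos d Hd). pose proof (AA_cc d Hd).
  set (s := sqrt (INR d - 1)) in *.
  destruct eps as [eps Heps]; simpl.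
  exists (2 / (eps * INR d)). intros y Hy.
  assert (HM : 0 < 2 / (eps * INR d)) by (apply Rdiv_lt_0_compat; nra).
  assert (Hy0 : 0 <= y) by lra.
  pose proof (Delta_le_a1 d Hd y Hy0) as H1. pose proof (Delta_ge0 d Hd y Hy0) as HD0.
  rewrite (cf_a_eq d Hd) in H1. fold s in H1.
  assert (Ha : y * INR d / (2 * s) <= (2 + INR 1 * y) * INR d / (2 * s) - cc d).
  { simpl INR. unfold AA in *. fold s in H0.
    replace ((2 + 1 * y) * INR d / (2 * s)) with (y * INR d / (2 * s) + INR d / s) by (field; lra).
    lra. }
  assert (Hp : 0 < y * INR d / (2 * s)) by (apply Rdiv_lt_0_compat; nra).
  assert (H2 : Defs.Delta d y <= 2 * s / (y * INR d)).
  { eapply Rle_trans. apply H1. replace (2 * s / (y * INR d)) with (/ (y * INR d / (2 * s))) by (field; split; lra).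
    apply Rinv_le_contravar; lra. }
  assert (H3 : 2 * s / (y * INR d) < eps * s).
  { assert (2 < y * (eps * INR d)).
    { apply Rmult_lt_reg_r with (/ (eps * INR d)). apply Rinv_0_lt_compat; nra.
      rewrite Rmult_assoc, Rinv_r by nra. rewrite Rmult_1_r. exact Hy. }
    apply Rmult_lt_reg_r with (y * INR d). nra.
    unfold Rdiv. rewrite Rmult_assoc, Rinv_l by nra. nra. }
  rewrite theta_eq. fold s.
  replace (1 - Defs.Delta d y / s - 1) with (- (Defs.Delta d y / s)) by ring.
  rewrite Rabs_Ropp, Rabs_pos_eq by (apply Rdiv_le_0_compat; lra).
  apply Rmult_lt_reg_r with s; auto. unfold Rdiv. rewrite Rmult_assoc, Rinv_l by lra. lra.
Qed.

Lemma part4 nu : 0 < nu -> is_lim_seq (fun d : nat => theta d nu) 1.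
Proof.
  intros Hnu. apply is_lim_seq_spec. intros [eps Heps]; simpl.
  destruct (archimed_cor1 eps Heps) as [N [HN HN0]].
  exists (N + 3)%nat. intros d Hd.
  assert (Hd3 : (3 <= d)%nat) by lia.
  assert (Hnu0 : 0 <= nu) by lra.
  pose proof (s_pos d Hd3) as Hs. pose proof (s_sq d Hd3).
  pose proof (Delta_le_cc d Hd3 nu Hnu0). pose proof (Delta_ge0 d Hd3 nu Hnu0).
  assert (HNd : INR N + 2 <= INR d).
  { replace 2 with (INR 2) by (simpl; ring). rewrite <- plus_INR. apply le_INR. lia. }
  assert (HN1 : 0 < INR N) by (apply lt_0_INR; lia).
  rewrite theta_eq. set (s := sqrt (INR d - 1)) in *.
  replace (1 - Defs.Delta d nu / s - 1) with (- (Defs.Delta d nu / s)) by ring.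
  rewrite Rabs_Ropp, Rabs_pos_eq by (apply Rdiv_le_0_compat; lra).
  apply Rle_lt_trans with (cc d / s).
  unfold Rdiv. apply Rmult_le_compat_r; auto. left; apply Rinv_0_lt_compat; lra.
  unfold cc. fold s. replace (/ s / s) with (/ (s * s)) by (field; lra).
  rewrite H. apply Rle_lt_trans with (/ INR N); auto.
  apply Rinv_le_contravar; lra.
Qed.

Theorem proposition2p7 :
  (forall d : nat, (3 <= d)%nat ->
     forall nu1 nu2 : R, 0 <= nu1 -> nu1 < nu2 -> theta d nu1 < theta d nu2) /\
  (forall nu : R, 0 < nu ->
     forall d1 d2 : nat, (3 <= d1)%nat -> (d1 < d2)%nat ->
       theta d1 nu < theta d2 nu) /\
  (forall d : nat, (3 <= d)%nat ->
     filterlim (theta d) (at_right 0) (locally (theta d 0)) /\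
     theta d 0 = (INR d - 2) / (INR d - 1) /\
     is_lim (theta d) p_infty 1) /\
  (forall nu : R, 0 < nu -> is_lim_seq (fun d : nat => theta d nu) 1).
Proof.
  split. exact part1. split. exact part2. split.
  intros d Hd. split. apply part3a; auto. split. apply theta0; auto. apply part3c; auto.
  exact part4.
Qed.
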